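(* Suppose that there exists an integer ${}^\lambda\mathrm{H}_t(m,n;s,k)$ with $\lambda$ odd. (1) If $t$ divides $\frac{nk}{\lambda}$, then $\frac{nk}{\lambda}\equiv 0\pmod 4$ or $\frac{nk}{\lambda}\equiv -t\equiv \pm1\pmod 4$. (2) If $t=\frac{2nk}{\lambda}$, then $s$ and $k$ are both even. (3) If $t\neq\frac{2nk}{\lambda}$ and $t$ does not divide $\frac{nk}{\lambda}$, then $\frac{2nk}{\lambda}+t\equiv 0\pmod 8$.
   Context: Let $m,n,s,k,\lambda,t$ be positive integers with $t$ dividing $\frac{2nk}{\lambda}$, let $v=\frac{2nk}{\lambda}+t$ and let $J$ be the subgroup of $\mathbb{Z}_v$ of order $t$. A $\lambda$-fold Heffter array ${}^\lambda\mathrm{H}_t(m,n;s,k)$ is an $m\times n$ partially filled array with entries in $\mathbb{Z}_v$ such that: (a) each row has exactly $s$ and each column exactly $k$ filled cells; (b) the multiset $\{\pm x: x$ an entry of a filled cell$\}$ contains each element of $\mathbb{Z}_v\setminus J$ exactly $\lambda$ times and no element of $J$; (c) every row and every column sums to $0$ in $\mathbb{Z}_v$. It is called integer if, when each entry is represented by its unique integer representative in $\pm\{1,2,\dots,\lfloor v/2\rfloor\}$, every row and every column sums to $0$ in $\mathbb{Z}$. *)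

(* Defs.v *)
From mathcomp Require Import all_boot all_order all_algebra.
Set Implicit Arguments. Unset Strict Implicit. Unset Printing Implicit Defensive.
Import GRing.Theory Num.Theory.

(* An element of Z_v is represented by its canonical residue x : nat, x < v.
   A partially filled m x n array is A : 'I_m -> 'I_n -> option nat
   (None = empty cell). *)

Definition hv (n k lam t : nat) : nat := (2 * n * k) %/ lam + t.

(* membership of a residue y < v in the subgroup J of Z_v of order t
   (J = <v/t>, the multiples of v/t) *)
Definition inJ (v t y : nat) : bool := (v %/ t) %| y.

(* number of occurrences of y in the multiset {+-x : x an entry} *)
Definition pm_count (m n v : nat) (A : 'I_m -> 'I_n -> option nat) (y : nat) : nat :=
  \sum_(i < m) \sum_(j < n)
     match A i j with
     | Some x => ((x %% v) == y) + (((v - x %% v) %% v) == y)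
     | None => 0
     end.

Definition zrep (v x : nat) : int :=
  if (x %% v) <= v./2 then Posz (x %% v) else (Posz (x %% v) - Posz v)%R.

Definition row_cnt m n (A : 'I_m -> 'I_n -> option nat) (i : 'I_m) : nat :=
  #|[set j : 'I_n | A i j != None]|.
Definition col_cnt m n (A : 'I_m -> 'I_n -> option nat) (j : 'I_n) : nat :=
  #|[set i : 'I_m | A i j != None]|.

Definition row_sum m n (A : 'I_m -> 'I_n -> option nat) (i : 'I_m) : nat :=
  \sum_(j < n) oapp id 0 (A i j).
Definition col_sum m n (A : 'I_m -> 'I_n -> option nat) (j : 'I_n) : nat :=
  \sum_(i < m) oapp id 0 (A i j).

Definition row_zsum v m n (A : 'I_m -> 'I_n -> option nat) (i : 'I_m) : int :=
  (\sum_(j < n) oapp (zrep v) 0 (A i j))%R.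
Definition col_zsum v m n (A : 'I_m -> 'I_n -> option nat) (j : 'I_n) : int :=
  (\sum_(i < m) oapp (zrep v) 0 (A i j))%R.

Definition is_heffter (m n s k lam t : nat) (A : 'I_m -> 'I_n -> option nat) : Prop :=
  let v := hv n k lam t in
  [/\ (forall i, row_cnt A i = s),
      (forall j, col_cnt A j = k),
      (forall i j x, A i j = Some x -> x < v),
      (forall y, y < v -> pm_count v A y = if inJ v t y then 0 else lam) &
      ((forall i, row_sum A i %% v = 0) /\
      (forall j, col_sum A j %% v = 0))].

Definition is_integer_heffter (m n s k lam t : nat) (A : 'I_m -> 'I_n -> option nat) : Prop :=
  let v := hv n k lam t in
  [/\ is_heffter s k lam t A,
      (forall i, row_zsum v A i = 0%R) &
      (forall j, col_zsum v A j = 0%R)].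

(* Main.v *)
Require Import Defs.
From mathcomp Require Import all_boot all_order all_algebra zify.
Import GRing.Theory Num.Theory.
Lemma half2 x : (x * 2)./2 = x.
Proof. by rewrite -divn2 mulnK. Qed.
Lemma half2S x : (x * 2 + 1)./2 = x.
Proof. by rewrite -divn2 divnMDl // divn_small // addn0. Qed.

Lemma split_mod (q p : nat) : 0 < p -> exists a b, b < p /\ q = p * a + b.
Proof. move=> p0; exists (q %/ p), (q %% p); split; first by rewrite ltn_pmod.
by rewrite {1}(divn_eq q p) mulnC. Qed.

Lemma arith (t h S : nat) : 0 < t -> t %| 2*h ->
  2*S + ((2*h+t)%/t) * (((2*h+t)./2) %/ ((2*h+t)%/t)) * (((2*h+t)./2) %/ ((2*h+t)%/t)).+1
    = (2*h+t)./2 * ((2*h+t)./2).+1 ->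
  ~~ odd S ->
  [/\ (t %| h -> h %% 4 = 0 \/ ((h + t) %% 4 = 0 /\ (h %% 4 = 1 \/ h %% 4 = 3))) &
      (~~ (t %| h) -> (2*h+t) %% 8 = 0)].
Proof.
move=> t0 /dvdnP [r hr] E eS.
have hv : 2*h+t = (r+1)*t by lia.
have hd : (2*h+t)%/t = r+1 by rewrite hv mulnK.
rewrite hd in E.
have [K eK] : exists K, S = 2*K.
  exists S./2; have := odd_double_half S; rewrite (negbTE eS) -muln2; lia.
subst S.
have [u [e [he et]]] := split_mod t 2 isT.
split.
- move=> /dvdnP [q hq].
  have er : r = 2 * q.
    apply/eqP; rewrite -(eqn_pmul2r t0); apply/eqP; lia.
  subst r.
  case: e he et => [|[|//]] _ et; subst t.
  + have eN : (2*h + 2*u)./2 = u * (2*q+1) by rewrite (_ : 2*h + _ = (u*(2*q+1))*2) ?half2 //; lia.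
    have eM : u * (2*q+1) %/ (2*q+1) = u by rewrite mulnK // addn1.
    rewrite (_ : 2*u+0 = 2*u) ?addn0 // in hq hr hv hd E *.
    rewrite eN eM in E; clear eN eM.
    have [a [b [hb eq]]] := split_mod q 2 isT.
    have [c [f [hf eu]]] := split_mod u 2 isT.
    subst q u; left.
    have : b = 0 \/ b = 1 by lia. case=> ?; subst b; (have : f = 0 \/ f = 1 by lia); case=> ?; subst f; lia.
  + have eN : (2*h + (2*u+1))./2 = u * (2*q+1) + q
      by rewrite (_ : 2*h + _ = (u*(2*q+1)+q)*2+1) ?half2S //; lia.
    have eM : (u * (2*q+1) + q) %/ (2*q+1) = u
      by rewrite divnMDl ?addn1 // divn_small ?addn0 //; lia.
    rewrite eN eM in E; clear eN eM.
    have [a [b [hb eq]]] := split_mod q 8 isT.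
    have [c [f [hf eu]]] := split_mod u 2 isT.
    subst q u.
    have : b = 0 \/ b = 1 \/ b = 2 \/ b = 3 \/ b = 4 \/ b = 5 \/ b = 6 \/ b = 7 by lia.
    case=> [?|[?|[?|[?|[?|[?|[?|?]]]]]]]; subst b; (have : f = 0 \/ f = 1 by lia); case=> ?; subst f;
      first [left; lia | right; lia | exfalso; lia].
- move=> ndv.
  have [w [g [hg er]]] := split_mod r 2 isT.
  case: g hg er => [|[|//]] _ er; subst r.
    by case/negP: ndv; apply/dvdnP; exists w; lia.
  case: e he et => [|[|//]] _ et; subst t; last by exfalso; lia.
  rewrite addn0 in hr hv hd E *.
  have eN : (2*h + 2*u)./2 = u * (2*w+1+1) by rewrite (_ : 2*h + _ = (u*(2*w+1+1))*2) ?half2 //; lia.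
  have eM : u * (2*w+1+1) %/ (2*w+1+1) = u by rewrite mulnK // addn1.
  rewrite eN eM in E; clear eN eM.
  have [a [b [hb eq]]] := split_mod (w+1) 2 isT.
  have [c [f [hf eu]]] := split_mod u 2 isT.
  subst u.
  have : b = 0 \/ b = 1 by lia. case=> ?; subst b; (have : f = 0 \/ f = 1 by lia); case=> ?; subst f; lia.
Qed.
Definition gg (v y : nat) : nat := if y <= v./2 then y else 0.
Definition cellh (v : nat) (o : option nat) : nat :=
  match o with Some x => gg v (x %% v) + gg v ((v - x %% v) %% v) | None => 0 end.
Definition pc (v : nat) (o : option nat) : nat :=
  match o with Some x => if x %% v <= v./2 then 0 else v - x %% v | None => 0 end.

Lemma sum_pick (v : nat) (g : nat -> nat) a : a < v -> \sum_(y < v) g y * (a == y) = g a.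
Proof.
move=> ha; rewrite (bigD1 (Ordinal ha)) //= eqxx muln1 big1 ?addn0 // => y hy.
rewrite (_ : (a == y) = false) ?muln0 //; apply/negbTE; apply: contra hy => /eqP e.
by apply/eqP/val_inj => /=; rewrite e.
Qed.

Lemma pm_weighted (m n v : nat) (A : 'I_m -> 'I_n -> option nat) (g : nat -> nat) :
  0 < v -> \sum_(y < v) g y * pm_count v A y = \sum_i \sum_j
     match A i j with Some x => g (x %% v) + g ((v - x %% v) %% v) | None => 0 end.
Proof.
move=> v0; rewrite /pm_count.
under [X in X = _]eq_bigr do rewrite big_distrr.
rewrite exchange_big; apply: eq_bigr => i _ /=.
under [X in X = _]eq_bigr do rewrite big_distrr.
rewrite exchange_big; apply: eq_bigr => j _ /=.
case: (A i j) => [x|]; last by rewrite big1 // => y _; rewrite muln0.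
under eq_bigr do rewrite mulnDr.
by rewrite big_split /= !sum_pick // ltn_pmod.
Qed.

Lemma pm_pos (m n v : nat) (A : 'I_m -> 'I_n -> option nat) i j x :
  A i j = Some x -> 0 < pm_count v A (x %% v).
Proof.
move=> e; rewrite /pm_count (bigD1 i) //= (bigD1 j) //= e eqxx /=; lia.
Qed.

Lemma cell_id v x : 0 < v -> ~~ ((0 < x %% v) && (x %% v + x %% v == v)) ->
  ((cellh v (Some x))%:Z = zrep v x + 2 * (pc v (Some x))%:Z)%R.
Proof.
move=> v0; rewrite /cellh /pc /zrep /gg.
have : x %% v < v by rewrite ltn_pmod.
move: (x %% v) => a ha hn.
case: (posnP a) => [a0|a0].
  subst a; have -> : (v - 0) %% v = 0 by rewrite subn0 modnn.
  rewrite !leq0n /=; lia.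
rewrite (modn_small (_ : v - a < v)); last by lia.
case: (leqP a v./2) => h1; case: (leqP (v - a) v./2) => h2; rewrite -?divn2 in h1 h2; lia.
Qed.

Lemma Posz_sum (I : Type) (r : seq I) (P : pred I) (F : I -> nat) :
  Posz (\sum_(i <- r | P i) F i) = (\sum_(i <- r | P i) Posz (F i))%R.
Proof. by apply: (big_morph Posz) => // a b; rewrite PoszD. Qed.

Lemma no_half (m n v t lam : nat) (A : 'I_m -> 'I_n -> option nat) :
  0 < v -> odd lam ->
  (forall y, y < v -> pm_count v A y = if inJ v t y then 0 else lam) ->
  forall i j x, A i j = Some x -> ~~ ((0 < x %% v) && (x %% v + x %% v == v)).
Proof.
move=> v0 ol pmc i j x e; apply/negP => /andP [a0 /eqP ha].
have pos := @pm_pos _ _ v _ _ _ _ e.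
move: pos a0 ha; set a := x %% v => pos a0 ha.
have hp : pm_count v A a = 2 * \sum_i \sum_j
    (match A i j with Some x => nat_of_bool (x %% v == a) | None => 0 end).
  rewrite /pm_count big_distrr; apply: eq_bigr => i' _ /=.
  rewrite big_distrr; apply: eq_bigr => j' _ /=.
  case: (A i' j') => [x'|] //=.
  have : x' %% v < v by rewrite ltn_pmod.
  move: (x' %% v) => b hb.
  case: (posnP b) => [->|b0].
    by rewrite subn0 modnn mul2n addnn.
  rewrite (modn_small (_ : v - b < v)); last by lia.
  have -> : (v - b == a) = (b == a) by apply/eqP/eqP; lia.
  by rewrite mul2n addnn.
have : a < v by rewrite ltn_pmod.
move=> /pmc; case: (inJ v t a) => E; first by rewrite E in pos.
by move: ol; rewrite -E hp oddM.
Qed.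

Lemma sum_cells_even (m n v : nat) (A : 'I_m -> 'I_n -> option nat) :
  0 < v ->
  (forall i j x, A i j = Some x -> ~~ ((0 < x %% v) && (x %% v + x %% v == v))) ->
  (forall i, row_zsum v A i = 0%R) ->
  \sum_i \sum_j cellh v (A i j) = 2 * \sum_i \sum_j pc v (A i j).
Proof.
move=> v0 nh rz.
have : Posz (\sum_i \sum_j cellh v (A i j)) =
       (\sum_i row_zsum v A i + 2 * Posz (\sum_i \sum_j pc v (A i j)))%R.
  rewrite !Posz_sum mulr_sumr -big_split; apply: eq_bigr => i _ /=.
  rewrite !Posz_sum /row_zsum mulr_sumr -big_split; apply: eq_bigr => j _ /=.
  case E: (A i j) => [x|] /=; last by rewrite mulr0 addr0.
  exact: cell_id (nh _ _ _ E).
have -> : (\sum_i row_zsum v A i = 0)%R by apply: big1 => i _; exact: rz.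
rewrite add0r => e; lia.
Qed.

Lemma Sformula (d N : nat) : 0 < d ->
  2 * (\sum_(y < N.+1) (if d %| y then 0 else y)) + d * (N %/ d) * (N %/ d).+1 = N * N.+1.
Proof.
move=> d0; elim: N => [|N IH].
  by rewrite big_ord_recr big_ord0 /= dvdn0 div0n muln0 mul0n.
rewrite big_ord_recr /=.
move: IH; set S := \sum_(i < N.+1) _ => IH.
case hd: (d %| N.+1).
  have := divnK hd; rewrite (divnS N d0) hd add1n => e; lia.
rewrite (divnS N d0) hd add0n; lia.
Qed.

Lemma Sconv (v t : nat) : 0 < v ->
  \sum_(y < v) (if inJ v t y then 0 else gg v y) =
  \sum_(y < (v./2).+1) (if (v %/ t) %| y then 0 else y).
Proof.
move=> v0.
have hle : (v./2).+1 <= v by rewrite -divn2; lia.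
rewrite (big_ord_widen v (fun y => if (v %/ t) %| y then 0 else y) hle) [RHS]big_mkcond.
apply: eq_bigr => y _; rewrite /inJ /gg ltnS.
by case: ifP; case: ifP.
Qed.

Lemma parity_S (m n lam v t : nat) (A : 'I_m -> 'I_n -> option nat) :
  0 < v -> odd lam ->
  (forall y, y < v -> pm_count v A y = if inJ v t y then 0 else lam) ->
  (forall i, row_zsum v A i = 0%R) ->
  ~~ odd (\sum_(y < (v./2).+1) (if (v %/ t) %| y then 0 else y)).
Proof.
move=> v0 ol pmc rz.
have nh := @no_half _ _ _ _ _ A v0 ol pmc.
have e1 : \sum_(y < v) gg v y * pm_count v A y = \sum_i \sum_j cellh v (A i j)
  by rewrite pm_weighted.
have e2 : \sum_(y < v) gg v y * pm_count v A y =
          lam * \sum_(y < v) (if inJ v t y then 0 else gg v y).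
  rewrite big_distrr; apply: eq_bigr => y _ /=; rewrite pmc //.
  by case: ifP => _; rewrite ?muln0 // mulnC.
have e3 := @sum_cells_even _ _ _ A v0 nh rz.
rewrite -Sconv //.
have : odd (lam * \sum_(y < v) (if inJ v t y then 0 else gg v y)) = odd (2 * \sum_i \sum_j pc v (A i j))
  by rewrite -e2 e1 e3.
by rewrite !oddM ol /= => ->.
Qed.

Lemma row_even (I : finType) (v : nat) (c : I -> option nat) : 0 < v -> ~~ odd v ->
  (forall j x, c j = Some x -> odd (x %% v)) ->
  (\sum_j oapp (zrep v) 0 (c j) = 0)%R -> ~~ odd #|[set j | c j != None]|.
Proof.
move=> v0 ev hodd hs.
have hc : #|[set j | c j != None]| = \sum_j nat_of_bool (c j != None).
  rewrite cardsE -sum1_card big_mkcond; apply: eq_bigr => j _.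
  by rewrite unfold_in /=; case: (c j).
pose w j : int := match c j with
  | Some x => (Posz ((x %% v)%N./2) - (if (x %% v <= v./2)%N then 0 else Posz (v./2)))%R
  | None => 0%R end.
have hw : forall j, oapp (zrep v) 0 (c j) = (Posz (nat_of_bool (c j != None)) + 2 * w j)%R.
  move=> j; rewrite /w; case E: (c j) => [x|] /=; last by rewrite mulr0 addr0.
  have := hodd j x E; rewrite /zrep; move: (x %% v) => a oa.
  have ha := odd_double_half a; rewrite oa -muln2 /= in ha.
  have hv := odd_double_half v; rewrite (negbTE ev) -muln2 add0n in hv.
  case: (leqP a v./2) => h; lia.
rewrite (eq_bigr _ (fun j _ => hw j)) big_split /= -mulr_sumr -Posz_sum in hs.
rewrite hc; move: (\sum_i w i)%R hs => W.
move: (\sum_j nat_of_bool (c j != None)) => C hs.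
have : C %% 2 = 0 by lia.
by rewrite modn2; case: (odd C).
Qed.

Theorem proposition4p3 (m n s k lam t : nat) :
  0 < m -> 0 < n -> 0 < s -> 0 < k -> 0 < lam -> 0 < t ->
  lam %| 2 * n * k -> t %| (2 * n * k) %/ lam ->
  odd lam ->
  (exists A : 'I_m -> 'I_n -> option nat, is_integer_heffter s k lam t A) ->
  [/\ (t %| (n * k) %/ lam ->
         ((n * k) %/ lam) %% 4 = 0 \/
         (((n * k) %/ lam + t) %% 4 = 0 /\
          (((n * k) %/ lam) %% 4 = 1 \/ ((n * k) %/ lam) %% 4 = 3))),
      (t = (2 * n * k) %/ lam -> ~~ odd s /\ ~~ odd k) &
      (t <> (2 * n * k) %/ lam -> ~~ (t %| (n * k) %/ lam) ->
         ((2 * n * k) %/ lam + t) %% 8 = 0)].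
Proof.
move=> m0 n0 s0 k0 l0 t0 ldv tdv ol [A].
rewrite /is_integer_heffter /is_heffter /= => -[[rc cc ltv pmc [rs cs]] rz cz].
have ldv' : lam %| n * k by rewrite -(@Gauss_dvdr lam 2) ?coprimen2 // mulnA.
set h := n * k %/ lam.
have eH : 2 * n * k %/ lam = 2 * h by rewrite /h muln_divA // mulnA.
rewrite eH in tdv *.
have ev : hv n k lam t = 2 * h + t by rewrite /hv eH.
have v0 : 0 < hv n k lam t by rewrite ev; lia.
have pS := @parity_S _ _ _ _ _ A v0 ol pmc rz.
have d0 : 0 < hv n k lam t %/ t by rewrite divn_gt0 // ev; lia.
have E := @Sformula _ ((hv n k lam t)./2) d0.
have [E' pS'] : 2 * (\sum_(y < ((hv n k lam t)./2).+1) (if hv n k lam t %/ t %| y then 0 else y)) +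
  hv n k lam t %/ t * ((hv n k lam t)./2 %/ (hv n k lam t %/ t)) * ((hv n k lam t)./2 %/ (hv n k lam t %/ t)).+1 =
  (hv n k lam t)./2 * ((hv n k lam t)./2).+1 /\ ~~ odd (\sum_(y < ((hv n k lam t)./2).+1) (if hv n k lam t %/ t %| y then 0 else y)) by [].
move: E' pS'; rewrite ev.
move: (\sum_(y < _) _) => S E' pS'.
have [p1 p3] := @arith _ _ _ t0 tdv E' pS'.
split; [exact: p1 | | by move=> _; exact: p3].
move=> et.
have ev2 : hv n k lam t = t * 2 by rewrite ev et; lia.
have hodd : forall i j x, A i j = Some x -> odd (x %% hv n k lam t).
  move=> i j x e.
  have pos := @pm_pos _ _ (hv n k lam t) _ _ _ _ e.
  have := pmc (x %% hv n k lam t) (ltn_pmod _ v0).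
  have d2 : hv n k lam t %/ t = 2 by rewrite ev2 mulKn.
  rewrite /inJ d2 dvdn2; case: ifP => [_ E2|/negbFE //].
  by rewrite E2 in pos.
have evn : ~~ odd (hv n k lam t) by rewrite ev2 oddM /= andbF.
split.
- rewrite -(rc (Ordinal m0)); apply: (@row_even _ _ _ v0 evn).
    by move=> j x; apply: hodd.
  exact: rz.
- rewrite -(cc (Ordinal n0)); apply: (@row_even _ _ _ v0 evn).
    by move=> i x; apply: hodd.
  exact: cz.
Qed.
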